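(* Let $a,b\in\mathrm{Im}(\mathbb{H})$ have norm one. Then $\mathbb{H}\times\mathbb{H}_{(T_{a,\bar a}\circ\sigma_{\mathbb{H}},\,T_{b,a})}$ is isomorphic to $\mathbb{H}\times\mathbb{H}_{(T_{i,\bar i}\circ\sigma_{\mathbb{H}},\,T_{i,i})}$.
   Context: For $a,b\in\mathbb{H}$, $T_{a,b}(x)=axb$ and $\sigma_{\mathbb{H}}(x)=\bar x$. On $\mathbb{H}\times\mathbb{H}$ the Cayley–Dickson product is $(x,y)\bullet(u,v)=(xu-\bar v y,\ y\bar u+vx)$; for linear maps $f,g$ of $\mathbb{H}$, $\mathbb{H}\times\mathbb{H}_{(f,g)}$ is $\mathbb{H}\times\mathbb{H}$ with product $(x,y)\odot(u,v)=(f(x),g(y))\bullet(u,v)$. *)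

(* Defs.v *)
From HB Require Import structures.
From mathcomp Require Import all_boot all_order all_algebra.
From mathcomp Require Import reals.
Set Implicit Arguments. Unset Strict Implicit. Unset Printing Implicit Defensive.
Import Order.TTheory GRing.Theory Num.Theory.
Local Open Scope ring_scope.

Section Quat.
Variable R : realType.

(** Quaternions x = q0 + q1 i + q2 j + q3 k. *)
Record quat := Quat { q0 : R; q1 : R; q2 : R; q3 : R }.

Definition qadd (x y : quat) : quat :=
  Quat (q0 x + q0 y) (q1 x + q1 y) (q2 x + q2 y) (q3 x + q3 y).
Definition qopp (x : quat) : quat := Quat (- q0 x) (- q1 x) (- q2 x) (- q3 x).
Definition qsub (x y : quat) : quat := qadd x (qopp y).
Definition qscale (c : R) (x : quat) : quat :=
  Quat (c * q0 x) (c * q1 x) (c * q2 x) (c * q3 x).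
(** Hamilton product, i^2 = j^2 = k^2 = ijk = -1. *)
Definition qmul (x y : quat) : quat :=
  Quat (q0 x * q0 y - q1 x * q1 y - q2 x * q2 y - q3 x * q3 y)
       (q0 x * q1 y + q1 x * q0 y + q2 x * q3 y - q3 x * q2 y)
       (q0 x * q2 y - q1 x * q3 y + q2 x * q0 y + q3 x * q1 y)
       (q0 x * q3 y + q1 x * q2 y - q2 x * q1 y + q3 x * q0 y).
Definition qconj (x : quat) : quat := Quat (q0 x) (- q1 x) (- q2 x) (- q3 x).
Definition qi : quat := Quat 0 1 0 0.

Definition is_imag (x : quat) : Prop := q0 x = 0.
Definition qnorm2 (x : quat) : R := q0 x ^+ 2 + q1 x ^+ 2 + q2 x ^+ 2 + q3 x ^+ 2.
Definition unit_norm (x : quat) : Prop := qnorm2 x = 1.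

Definition T (a b : quat) (x : quat) : quat := qmul (qmul a x) b.
Definition sigmaH (x : quat) : quat := qconj x.

Definition cd_mul (p q : quat * quat) : quat * quat :=
  let: (x, y) := p in let: (u, v) := q in
  (qsub (qmul x u) (qmul (qconj v) y), qadd (qmul y (qconj u)) (qmul v x)).

(** product of H x H_(f,g) *)
Definition cd_twisted_mul (f g : quat -> quat) (p q : quat * quat) : quat * quat :=
  cd_mul (f p.1, g p.2) q.

Definition padd (p q : quat * quat) : quat * quat := (qadd p.1 q.1, qadd p.2 q.2).
Definition pscale (c : R) (p : quat * quat) : quat * quat := (qscale c p.1, qscale c p.2).

Definition alg_iso (mul1 mul2 : quat * quat -> quat * quat -> quat * quat)
  (phi : quat * quat -> quat * quat) : Prop :=
  [/\ (forall p q, phi (padd p q) = padd (phi p) (phi q)),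
      (forall (c : R) p, phi (pscale c p) = pscale c (phi p)),
      bijective phi &
      (forall p q, phi (mul1 p q) = mul2 (phi p) (phi q))].

Definition alg_isomorphic (mul1 mul2 : quat * quat -> quat * quat -> quat * quat) : Prop :=
  exists phi, alg_iso mul1 mul2 phi.

End Quat.

(* Main.v *)
Require Import Defs.
From mathcomp Require Import all_boot all_order all_algebra reals.
From mathcomp Require Import ring lra.
Set Implicit Arguments. Unset Strict Implicit. Unset Printing Implicit Defensive.
Import Order.TTheory GRing.Theory Num.Theory.
Local Open Scope ring_scope.

Section Q.
Variable R : realType.
Implicit Types x y z p : quat R.

Definition q1' : quat R := Quat 1 0 0 0.

Lemma qmulA x y z : qmul x (qmul y z) = qmul (qmul x y) z. Proof. by do ? match goal with x : quat R |- _ => destruct x end;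
  rewrite /qsub /qmul /qconj /qadd /qopp /qscale /=; congr Quat; ring. Qed.
Lemma qconjM x y : qconj (qmul x y) = qmul (qconj y) (qconj x). Proof. by do ? match goal with x : quat R |- _ => destruct x end;
  rewrite /qsub /qmul /qconj /qadd /qopp /qscale /=; congr Quat; ring. Qed.
Lemma qconjK x : qconj (qconj x) = x. Proof. by do ? match goal with x : quat R |- _ => destruct x end;
  rewrite /qsub /qmul /qconj /qadd /qopp /qscale /=; congr Quat; ring. Qed.
Lemma qmulDl x y z : qmul (qadd x y) z = qadd (qmul x z) (qmul y z). Proof. by do ? match goal with x : quat R |- _ => destruct x end;
  rewrite /qsub /qmul /qconj /qadd /qopp /qscale /=; congr Quat; ring. Qed.
Lemma qmulDr x y z : qmul z (qadd x y) = qadd (qmul z x) (qmul z y). Proof. by do ? match goal with x : quat R |- _ => destruct x end;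
  rewrite /qsub /qmul /qconj /qadd /qopp /qscale /=; congr Quat; ring. Qed.
Lemma qmulBl x y z : qmul (qsub x y) z = qsub (qmul x z) (qmul y z). Proof. by do ? match goal with x : quat R |- _ => destruct x end;
  rewrite /qsub /qmul /qconj /qadd /qopp /qscale /=; congr Quat; ring. Qed.
Lemma qmulBr x y z : qmul z (qsub x y) = qsub (qmul z x) (qmul z y). Proof. by do ? match goal with x : quat R |- _ => destruct x end;
  rewrite /qsub /qmul /qconj /qadd /qopp /qscale /=; congr Quat; ring. Qed.
Lemma qmulZl c x y : qmul (qscale c x) y = qscale c (qmul x y). Proof. by do ? match goal with x : quat R |- _ => destruct x end;
  rewrite /qsub /qmul /qconj /qadd /qopp /qscale /=; congr Quat; ring. Qed.
Lemma qmulZr c x y : qmul y (qscale c x) = qscale c (qmul y x). Proof. by do ? match goal with x : quat R |- _ => destruct x end;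
  rewrite /qsub /qmul /qconj /qadd /qopp /qscale /=; congr Quat; ring. Qed.
Lemma qmul1l x : qmul q1' x = x. Proof. by do ? match goal with x : quat R |- _ => destruct x end;
  rewrite /qsub /qmul /qconj /qadd /qopp /qscale /=; congr Quat; ring. Qed.
Lemma qmul1r x : qmul x q1' = x. Proof. by do ? match goal with x : quat R |- _ => destruct x end;
  rewrite /qsub /qmul /qconj /qadd /qopp /qscale /=; congr Quat; ring. Qed.

Lemma qconj_unit_l p : unit_norm p -> qmul (qconj p) p = q1'.
Proof.
case: p => p0 p1 p2 p3; rewrite /unit_norm /qnorm2 /= => h.
rewrite /qmul /qconj /=; congr Quat; try ring.
by rewrite -h; ring.
Qed.
Lemma qconj_unit_r p : unit_norm p -> qmul p (qconj p) = q1'.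
Proof.
case: p => p0 p1 p2 p3; rewrite /unit_norm /qnorm2 /= => h.
rewrite /qmul /qconj /=; congr Quat; try ring.
by rewrite -h; ring.
Qed.

Lemma rot_exists a : is_imag a -> unit_norm a ->
  exists p, unit_norm p /\ qmul p a = qmul (qi R) p.
Proof.
case: a => a0 a1 a2 a3; rewrite /is_imag /unit_norm /qnorm2 /= => h0 hn.
subst a0.
have [e|ne] := eqVneq a1 (-1).
  subst a1.
  have h2 : a2 ^+ 2 + a3 ^+ 2 = 0 by lra.
  have e2 : a2 = 0.
    apply/eqP; rewrite -sqrf_eq0 eq_le sqr_ge0 andbT.
    by rewrite -h2 lerDl sqr_ge0.
  have e3 : a3 = 0 by move: h2; rewrite e2 expr0n /= add0r => /eqP; rewrite sqrf_eq0 => /eqP.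
  subst; exists (Quat 0 0 1 0); split.
    by rewrite /unit_norm /qnorm2 /=; ring.
  by rewrite /qmul /=; congr Quat; ring.
set p0 := Quat (1 + a1) 0 a3 (- a2).
have hN : 0 < qnorm2 p0.
  rewrite /qnorm2 /=.
  have h1 : 0 < (1 + a1) ^+ 2.
    rewrite lt_def sqr_ge0 andbT sqrf_eq0.
    apply/eqP => h; move: ne; rewrite (_ : a1 = -1) ?eqxx //; lra.
  have := sqr_ge0 a2; have := sqr_ge0 a3.
  rewrite expr0n /=; lra.
exists (qscale (Num.sqrt (qnorm2 p0))^-1 p0); split.
  move: hN; rewrite /unit_norm /qnorm2 /=; set N := _ + _ => hN.
  have hs : Num.sqrt N ^+ 2 = N by rewrite sqr_sqrtr // ltW.
  have hs0 : Num.sqrt N != 0 by rewrite sqrtr_eq0 -ltNge.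
  rewrite !exprMn exprVn hs -!mulrDr.
  by rewrite -/N mulVf // gt_eqF.
rewrite qmulZl /qi qmulZr; congr qscale.
rewrite /qmul /p0 /=; congr Quat; nra.
Qed.

Lemma qcancel p w : unit_norm p -> qmul (qmul w (qconj p)) p = w.
Proof. by move=> h; rewrite -qmulA qconj_unit_l // qmul1r. Qed.
Lemma qcancel' p w : unit_norm p -> qmul (qmul w p) (qconj p) = w.
Proof. by move=> h; rewrite -qmulA qconj_unit_r // qmul1r. Qed.
Lemma qcancell p w : unit_norm p -> qmul (qmul (qconj p) p) w = w.
Proof. by move=> h; rewrite qconj_unit_l // qmul1l. Qed.
Lemma qcancell' p w : unit_norm p -> qmul (qmul p (qconj p)) w = w.
Proof. by move=> h; rewrite qconj_unit_r // qmul1l. Qed.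

Lemma qconj3 p u : qconj (qmul (qmul p u) (qconj p)) = qmul (qmul p (qconj u)) (qconj p).
Proof. by rewrite qconjM qconjK qconjM qmulA. Qed.
Lemma qconj3' q v p : qconj (qmul (qmul q v) (qconj p)) = qmul (qmul p (qconj v)) (qconj q).
Proof. by rewrite qconjM qconjK qconjM qmulA. Qed.

Lemma main_iso a b p q : unit_norm p -> unit_norm q ->
  qmul p a = qmul (qi R) p -> qmul q b = qmul (qi R) q ->
  alg_isomorphic
    (cd_twisted_mul (fun x => T a (qconj a) (sigmaH x)) (T b a))
    (cd_twisted_mul (fun x => T (qi R) (qconj (qi R)) (sigmaH x)) (T (qi R) (qi R))).
Proof.
move=> hp hq hpa hqb.
set P := fun x => qmul (qmul p x) (qconj p).
set Q := fun y => qmul (qmul q y) (qconj p).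
have hA : qmul (qconj p) (qi R) = qmul a (qconj p).
  rewrite -[qmul a _]qmul1l -(qconj_unit_l hp) -(qmulA (qconj p)) (qmulA p a) hpa.
  by rewrite !qmulA qcancel'.
have hA' : qmul (qconj p) (qconj (qi R)) = qmul (qconj a) (qconj p).
  by rewrite -!qconjM hpa.
have F x : T (qi R) (qconj (qi R)) (sigmaH (P x)) = P (T a (qconj a) (sigmaH x)).
  rewrite /T /sigmaH /P qconj3 !qmulA -hpa -qmulA hA'.
  by rewrite !qmulA.
have G y : T (qi R) (qi R) (Q y) = Q (T b a y).
  rewrite /T /Q !qmulA -hqb -qmulA hA.
  by rewrite !qmulA.
have M x u : P (qmul x u) = qmul (P x) (P u).
  by rewrite /P !qmulA qcancel.
have C v z : qmul (qconj (Q v)) (Q z) = P (qmul (qconj v) z).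
  by rewrite /P /Q qconj3' !qmulA qcancel.
have S1 z u : Q (qmul z (qconj u)) = qmul (Q z) (qconj (P u)).
  by rewrite /P /Q qconj3 !qmulA qcancel.
have S2 v w : Q (qmul v w) = qmul (Q v) (P w).
  by rewrite /P /Q !qmulA qcancel.
have PB x y : P (qsub x y) = qsub (P x) (P y) by rewrite /P qmulBr qmulBl.
have QD x y : Q (qadd x y) = qadd (Q x) (Q y) by rewrite /Q qmulDr qmulDl.
exists (fun X => (P X.1, Q X.2)); split.
- by case=> x y [u v]; rewrite /padd /P /Q /= !qmulDr !qmulDl.
- by move=> c [x y]; rewrite /pscale /P /Q /= !qmulZr !qmulZl.
- exists (fun X => (qmul (qmul (qconj p) X.1) p, qmul (qmul (qconj q) X.2) p)).
  + case=> x y; rewrite /P /Q /= !qmulA !qcancell // !qcancel //.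
  + case=> x y; rewrite /P /Q /= !qmulA !qcancell' // !qcancel' //.
- case=> x y [u v]; rewrite /cd_twisted_mul /cd_mul /=; congr pair.
  + by rewrite PB F G -M C.
  + by rewrite QD F G S1 S2.
Qed.

Theorem corollary6' (a b : quat R) :
  is_imag a -> unit_norm a -> is_imag b -> unit_norm b ->
  alg_isomorphic
    (cd_twisted_mul (fun x => T a (qconj a) (sigmaH x)) (T b a))
    (cd_twisted_mul (fun x => T (qi R) (qconj (qi R)) (sigmaH x)) (T (qi R) (qi R))).
Proof.
move=> ha hna hb hnb.
have [p [hp hpa]] := rot_exists ha hna.
have [q [hq hqb]] := rot_exists hb hnb.
exact: main_iso hp hq hpa hqb.
Qed.
End Q.

Theorem corollary6 (R : realType) (a b : quat R) :
  is_imag a -> unit_norm a -> is_imag b -> unit_norm b ->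
  alg_isomorphic
    (cd_twisted_mul (fun x => T a (qconj a) (sigmaH x)) (T b a))
    (cd_twisted_mul (fun x => T (qi R) (qconj (qi R)) (sigmaH x)) (T (qi R) (qi R))).
Proof. exact: corollary6'. Qed.
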